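(* Let $\bm X=X_1\times\cdots\times X_n\in\mathbb{IR}^n$ with $\operatorname{wid}(X_i)>0$ for at least one $i$. Let $Z\subseteq\mathbb{R}$ be convex with $\sum_{i=1}^n x_i\in Z$ for all $\bm x\in\bm X$, and let $\varphi:Z\to\mathbb{R}$ be convex. Define $\mathcal P=\{j\in\{1,\dots,n\}:\operatorname{wid}(X_j)>0\}$, $\theta_i=\operatorname{wid}(X_i)/\sum_{j\in\mathcal P}\operatorname{wid}(X_j)$ for $i\in\mathcal P$, $\underline\sigma=\sum_{i=1}^n\underline X_i$ and $\overline\sigma=\sum_{i=1}^n\overline X_i$. Then for all $\bm x\in\bm X$, $$\varphi\Big(\sum_{i=1}^n x_i\Big)\le\sum_{i\in\mathcal P}\theta_i\,\varphi\Big(\frac{x_i-\underline X_i}{\theta_i}+\underline\sigma\Big)=\sum_{i\in\mathcal P}\theta_i\,\varphi\Big(\frac{x_i-\overline X_i}{\theta_i}+\overline\sigma\Big).$$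
   Context: $\mathbb{IR}^n$ is the set of boxes $\bm X=X_1\times\cdots\times X_n$ with $X_i=[\underline X_i,\overline X_i]$ compact real intervals; $\operatorname{wid}(X_i)=\overline X_i-\underline X_i$. *)

(* Defs.v *)
From mathcomp Require Import all_boot all_order all_algebra.
Set Implicit Arguments. Unset Strict Implicit. Unset Printing Implicit Defensive.
Import Order.TTheory GRing.Theory Num.Theory.
Local Open Scope ring_scope.

Definition convex_set (R : realFieldType) (Z : R -> Prop) : Prop :=
  forall a b t : R, Z a -> Z b -> 0 <= t -> t <= 1 -> Z (t * a + (1 - t) * b).

(* phi : Z -> R is convex (phi given as a total function, only its values on Z matter). *)
Definition convex_on (R : realFieldType) (Z : R -> Prop) (phi : R -> R) : Prop :=
  forall a b t : R, Z a -> Z b -> 0 <= t -> t <= 1 ->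
    phi (t * a + (1 - t) * b) <= t * phi a + (1 - t) * phi b.

Definition in_box (R : realFieldType) (n : nat) (lo hi x : 'I_n -> R) : Prop :=
  forall i, lo i <= x i <= hi i.

Definition wid (R : realFieldType) (n : nat) (lo hi : 'I_n -> R) (i : 'I_n) : R :=
  hi i - lo i.

Definition theta (R : realFieldType) (n : nat) (lo hi : 'I_n -> R) (i : 'I_n) : R :=
  wid lo hi i / \sum_(j | 0 < wid lo hi j) wid lo hi j.

(* Main.v *)
Require Import Defs.
From mathcomp Require Import all_boot all_order all_algebra.
From mathcomp Require Import ring lra.
Import Order.TTheory GRing.Theory Num.Theory.
Local Open Scope ring_scope.

Lemma jensen_seq (R : realFieldType) (T : eqType) (Z : R -> Prop) (phi : R -> R)
  (c p : T -> R) (s : seq T) :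
  convex_set Z -> convex_on Z phi ->
  (forall i, i \in s -> 0 < c i /\ Z (p i)) -> s != [::] ->
  Z ((\sum_(i <- s) c i * p i) / \sum_(i <- s) c i) /\
  phi ((\sum_(i <- s) c i * p i) / \sum_(i <- s) c i) * \sum_(i <- s) c i
    <= \sum_(i <- s) c i * phi (p i).
Proof.
move=> cZ cphi; elim: s => [//|a s IH] Hs _.
have [ca Za] := Hs a (mem_head _ _).
case: s IH Hs => [|b s] IH Hs.
  rewrite !big_cons !big_nil !addr0.
  have ->: c a * p a / c a = p a by field; rewrite gt_eqF.
  by split=> //; rewrite mulrC.
have [] := IH (fun i hi => Hs i ltac:(by rewrite in_cons hi orbT)) isT.
rewrite !(big_cons _ _ a).
set S1 := \sum_(i <- b :: s) c i * p i.
set C := \sum_(i <- b :: s) c i.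
set F := \sum_(i <- b :: s) c i * phi (p i).
move=> Zm Hm.
have Cpos : 0 < C.
  rewrite /C big_cons; apply: ltr_wpDr; last by have [] := Hs b ltac:(by rewrite !in_cons eqxx orbT).
  rewrite big_seq; apply: sumr_ge0 => i hi.
  by have [/ltW] := Hs i ltac:(by rewrite !in_cons hi !orbT).
set t := c a / (c a + C).
have t0 : 0 <= t by rewrite /t divr_ge0 // ltW // addr_gt0.
have t1 : t <= 1 by rewrite /t ler_pdivrMr ?addr_gt0 // mul1r lerDl ltW.
have E : (c a * p a + S1) / (c a + C) = t * p a + (1 - t) * (S1 / C).
  rewrite /t; field; apply/andP; split; rewrite gt_eqF // addr_gt0 //.
rewrite E; split; first exact: cZ.
have := cphi _ _ _ Za Zm t0 t1.
move=> H.
have Hp : 0 < c a + C by rewrite addr_gt0.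
apply: le_trans (_ : (t * phi (p a) + (1 - t) * phi (S1 / C)) * (c a + C) <= _).
  by rewrite ler_pM2r.
have -> : (t * phi (p a) + (1 - t) * phi (S1 / C)) * (c a + C)
   = c a * phi (p a) + phi (S1 / C) * C.
  rewrite /t; field; rewrite gt_eqF //.
by rewrite lerD2l.
Qed.

Theorem proposition2 (R : realFieldType) (n : nat) (lo hi : 'I_n -> R)
  (Z : R -> Prop) (phi : R -> R) :
  (forall i, lo i <= hi i) ->
  (exists i, 0 < wid lo hi i) ->
  convex_set Z ->
  (forall x : 'I_n -> R, in_box lo hi x -> Z (\sum_(i < n) x i)) ->
  convex_on Z phi ->
  forall x : 'I_n -> R, in_box lo hi x ->
    phi (\sum_(i < n) x i) <=
      \sum_(i | 0 < wid lo hi i)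
         theta lo hi i * phi ((x i - lo i) / theta lo hi i + \sum_(k < n) lo k)
    /\
    \sum_(i | 0 < wid lo hi i)
         theta lo hi i * phi ((x i - lo i) / theta lo hi i + \sum_(k < n) lo k)
    = \sum_(i | 0 < wid lo hi i)
         theta lo hi i * phi ((x i - hi i) / theta lo hi i + \sum_(k < n) hi k).
Proof.
move=> lohi [i0 Hi0] cZ Zbox cphi x xin.
set P := fun i => 0 < wid lo hi i.
set W := \sum_(j | 0 < wid lo hi j) wid lo hi j.
have wge0 : forall j, 0 <= wid lo hi j by move=> j; rewrite /wid subr_ge0.
have Wall : \sum_(j < n) wid lo hi j = W.
  rewrite (bigID (fun j => 0 < wid lo hi j)) /= [X in _ + X]big1 ?addr0 //.
  by move=> j; rewrite lt_neqAle wge0 andbT negbK => /eqP <-.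
have Wpos : 0 < W.
  rewrite /W (bigD1 i0) //=; apply: ltr_wpDr => //.
  by apply: sumr_ge0 => j _; apply: wge0.
have thpos : forall i, 0 < wid lo hi i -> 0 < theta lo hi i.
  by move=> i hi0; rewrite /theta divr_gt0.
have sumth : \sum_(i | 0 < wid lo hi i) theta lo hi i = 1.
  by rewrite /theta -mulr_suml -/W divff // gt_eqF.
have nonP : forall i, ~~ (0 < wid lo hi i) -> x i = lo i.
  move=> i; rewrite lt_neqAle wge0 andbT negbK /wid => /eqP E.
  have := xin i => /andP[a b]; lra.
set sl := \sum_(k < n) lo k.
have Hsh : \sum_(k < n) hi k = sl + W.
  by rewrite -Wall /wid sumrB /sl addrC subrK.
split; last first.
  apply: eq_bigr => i Pi; congr (_ * phi _).
  rewrite Hsh /theta -/W.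
  have wp : wid lo hi i != 0 by rewrite gt_eqF.
  have Wn : W != 0 by rewrite gt_eqF.
  have -> : hi i = lo i + wid lo hi i by rewrite /wid addrC subrK.
  by field; rewrite Wn wp.
set p := fun i => (x i - lo i) / theta lo hi i + sl.
rewrite -(big_filter _ (fun i => 0 < wid lo hi i)).
set s := [seq i <- index_enum 'I_n | 0 < wid lo hi i].
have mem_s : forall i, (i \in s) = (0 < wid lo hi i).
  by move=> i; rewrite /s mem_filter mem_index_enum andbT.
have sne : s != [::].
  by apply/eqP => E; have := mem_s i0; rewrite E in_nil Hi0.
have [] := @jensen_seq R _ Z phi (theta lo hi) p s cZ cphi _ sne.
- move=> i; rewrite mem_s => Pi; split; first exact: thpos.
  set t := (x i - lo i) / wid lo hi i.
  have wp : 0 < wid lo hi i by [].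
  have := xin i => /andP[xl xh].
  have t0 : 0 <= t by rewrite /t divr_ge0 // subr_ge0.
  have t1 : t <= 1 by rewrite /t ler_pdivrMr // mul1r /wid lerD2r.
  have -> : p i = \sum_(k < n) (lo k + t * wid lo hi k).
    rewrite big_split /= -mulr_sumr Wall /p /sl /theta -/W /t addrC; congr (_ + _).
    by field; rewrite !gt_eqF.
  apply: Zbox => k; rewrite lerDl mulr_ge0 //= -lerBrDl.
  by rewrite -[X in _ <= X]mul1r ler_wpM2r.
rewrite /s !big_filter sumth divr1 mulr1 => _.
suff -> : \sum_(i | 0 < wid lo hi i) theta lo hi i * p i = \sum_(i < n) x i by [].
have -> : \sum_(i | 0 < wid lo hi i) theta lo hi i * p i
   = \sum_(i | 0 < wid lo hi i) ((x i - lo i) + theta lo hi i * sl).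
  apply: eq_bigr => i Pi; rewrite /p; have := thpos i Pi => tp.
  by field; rewrite gt_eqF.
rewrite big_split /= -mulr_suml sumth mul1r.
have -> : \sum_(i | 0 < wid lo hi i) (x i - lo i) = \sum_(i < n) (x i - lo i).
  rewrite [RHS](bigID (fun j => 0 < wid lo hi j)) /= [X in _ = _ + X]big1 ?addr0 //.
  by move=> j /nonP ->; rewrite subrr.
by rewrite sumrB /sl subrK.
Qed.
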